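(* For all integers $n\ge0$ and $p\ge1$, $$\mathcal{B}_{n,p}=p!\int_0^1dx_p\int_0^{x_p}dx_{p-1}\cdots\int_0^{x_2}\phi_n(x_1)\,dx_1,$$ i.e. $\mathcal{B}_{n,p}$ equals $p!$ times the $p$-fold iterated integral from $0$ of $\phi_n$, evaluated at $x=1$.
   Context: $S(n,k)$ denotes the Stirling numbers of the second kind and $\phi_n(x)=\sum_{k=0}^nS(n,k)x^k$ are the single-variable Bell (exponential) polynomials. For an integer $p\ge0$, the $p$-Bell numbers $\mathcal{B}_{n,p}$ are defined by $\sum_{n\ge0}\mathcal{B}_{n,p}\frac{z^n}{n!}=\sum_{n\ge0}\binom{n+p}{p}^{-1}\frac{(e^z-1)^n}{n!}$. *)

(* Defs.v *)
From Stdlib Require Import Reals Arith.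
From Coquelicot Require Import Coquelicot.
Open Scope R_scope.

Fixpoint stirling2 (n k : nat) : nat :=
  match n, k with
  | O, O => 1%nat
  | O, S _ => 0%nat
  | S _, O => 0%nat
  | S n', S k' => (S k' * stirling2 n' (S k') + stirling2 n' k')%nat
  end.

Definition bell_poly (n : nat) (x : R) : R :=
  sum_f_R0 (fun k => INR (stirling2 n k) * x ^ k) n.

Definition fps := nat -> R.
Definition fps_mul (a b : fps) : fps :=
  fun n => sum_f_R0 (fun i => a i * b (n - i)%nat) n.
Definition fps_one : fps := fun n => if Nat.eqb n 0 then 1 else 0.
Fixpoint fps_pow (a : fps) (k : nat) : fps :=
  match k with
  | O => fps_one
  | S k' => fps_mul a (fps_pow a k')
  end.
Definition exp_minus_one : fps :=
  fun m => if Nat.eqb m 0 then 0 else / INR (fact m).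

(* p-Bell numbers: n! times the coefficient of z^n in
   sum_{k>=0} binom(k+p,p)^{-1} (e^z-1)^k / k!.
   Terms with k > n contribute nothing to the z^n coefficient, since
   (e^z-1)^k has valuation k; so the sum over k is truncated at n. *)
Definition pBell (n p : nat) : R :=
  INR (fact n) *
  sum_f_R0 (fun k => / Binomial.C (k + p) p * fps_pow exp_minus_one k n / INR (fact k)) n.

Fixpoint iter_int (p : nat) (f : R -> R) : R -> R :=
  match p with
  | O => f
  | S p' => fun x => RInt (iter_int p' f) 0 x
  end.

(* Main.v *)
Require Import Defs.
From Stdlib Require Import Reals Arith Lia FunctionalExtensionality.
From Coquelicot Require Import Coquelicot.
Open Scope R_scope.

Lemma mono_int (j : nat) (x : R) : is_RInt (fun t => t ^ j) 0 x (x ^ S j / INR (S j)).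
Proof.
  assert (Hc : INR (S j) <> 0) by (apply not_0_INR; lia).
  remember (INR (S j)) as c eqn:Hc'.
  set (F := fun t => t ^ S j / c).
  assert (H := is_RInt_derive (V:=R_CompleteNormedModule) F (fun t => t^j) 0 x).
  replace (x ^ S j / c) with (minus (F x) (F 0)). apply H.
  - intros t _. unfold F. auto_derive. exact I.
    change (match j with 0%nat => 1 | S _ => INR j + 1 end) with (INR (S j)).
    rewrite <- Hc'. field. exact Hc.
  - intros t _. apply (ex_derive_continuous (K:=R_AbsRing) (V:=R_NormedModule) (fun t => t^j)). auto_derive. auto.
  - unfold F, minus, plus, opp. simpl. unfold Rdiv. rewrite !Rmult_0_l. rewrite Ropp_0, Rplus_0_r. reflexivity.
Qed.

Lemma poly_int (c : nat -> R) (m n : nat) (x : R) :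
  is_RInt (fun t => sum_f_R0 (fun k => c k * t ^ (k + m)) n) 0 x
    (sum_f_R0 (fun k => c k * (x ^ S (k + m) / INR (S (k + m)))) n).
Proof.
  induction n.
  - exact (is_RInt_scal (V:=R_NormedModule) (fun t => t^(0+m)) 0 x (c 0%nat) _ (mono_int _ x)).
  - exact (is_RInt_plus (V:=R_NormedModule) _ _ 0 x _ _ IHn
      (is_RInt_scal (V:=R_NormedModule) (fun t => t^(S n+m)) 0 x (c (S n)) _ (mono_int _ x))).
Qed.

Lemma iter_int_bell (n p : nat) (x : R) :
  iter_int p (bell_poly n) x =
  sum_f_R0 (fun k => (INR (stirling2 n k) * (INR (fact k) / INR (fact (k + p)))) * x ^ (k + p)) n.
Proof.
  revert x. induction p; intro x.
  - simpl. unfold bell_poly. apply sum_eq. intros i _.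
    rewrite Nat.add_0_r. field. apply INR_fact_neq_0.
  - simpl. assert (E : iter_int p (bell_poly n) = fun t =>
      sum_f_R0 (fun k => (INR (stirling2 n k) * (INR (fact k) / INR (fact (k + p)))) * t ^ (k + p)) n).
    { apply functional_extensionality. exact IHp. }
    rewrite E. rewrite (is_RInt_unique _ _ _ _ (poly_int _ p n x)).
    apply sum_eq. intros i _.
    replace (i + S p)%nat with (S (i + p)) by lia.
    rewrite fact_simpl, mult_INR.
    assert (INR (S (i+p)) <> 0) by (apply not_0_INR; lia).
    assert (H2 := INR_fact_neq_0 (i+p)).
    field. auto.
Qed.
Definition fD (a : fps) : fps := fun n => INR (S n) * a (S n).

Lemma mul_ext (a b b' : fps) n : (forall m, b m = b' m) -> fps_mul a b n = fps_mul a b' n.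
Proof. intros H. unfold fps_mul. apply sum_eq. intros. rewrite H. reflexivity. Qed.

Lemma mul_ext_l (a a' b : fps) n : (forall m, a m = a' m) -> fps_mul a b n = fps_mul a' b n.
Proof. intros H. unfold fps_mul. apply sum_eq. intros. rewrite H. reflexivity. Qed.

Lemma mul_plus_l (a b c : fps) n :
  fps_mul (fun m => a m + b m) c n = fps_mul a c n + fps_mul b c n.
Proof. unfold fps_mul. rewrite <- plus_sum. apply sum_eq. intros. ring. Qed.

Lemma mul_plus_r (a b c : fps) n :
  fps_mul a (fun m => b m + c m) n = fps_mul a b n + fps_mul a c n.
Proof. unfold fps_mul. rewrite <- plus_sum. apply sum_eq. intros. ring. Qed.

Lemma mul_scal_r (a b : fps) r n :
  fps_mul a (fun m => r * b m) n = r * fps_mul a b n.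
Proof. unfold fps_mul. rewrite scal_sum. apply sum_eq. intros. ring. Qed.

Lemma sum_zero (f : nat -> R) N : (forall i, (i <= N)%nat -> f i = 0) -> sum_f_R0 f N = 0.
Proof.
  intros H. rewrite (sum_eq f (fun _ => 0)) by auto. rewrite sum_cte. ring.
Qed.

Lemma one_mul (a : fps) n : fps_mul fps_one a n = a n.
Proof.
  unfold fps_mul. destruct n.
  - unfold fps_one; simpl. ring.
  - rewrite decomp_sum by lia. simpl pred. rewrite sum_zero.
    + unfold fps_one; simpl. ring.
    + intros i _. unfold fps_one; simpl. ring.
Qed.

Lemma mul_one (a : fps) n : fps_mul a fps_one n = a n.
Proof.
  unfold fps_mul. destruct n.
  - unfold fps_one; simpl. ring.
  - rewrite tech5. rewrite sum_zero.
    + rewrite Nat.sub_diag. unfold fps_one; simpl. ring.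
    + intros i Hi. unfold fps_one.
      replace (Nat.eqb (S n - i) 0) with false. ring.
      symmetry. apply Nat.eqb_neq. lia.
Qed.

Lemma leibniz (a b : fps) n :
  fD (fps_mul a b) n = fps_mul (fD a) b n + fps_mul a (fD b) n.
Proof.
  unfold fD, fps_mul.
  rewrite scal_sum.
  rewrite (sum_eq _ (fun i => INR i * (a i * b (S n - i)%nat) + INR (S n - i) * (a i * b (S n - i)%nat)))
    by (intros i Hi; rewrite <- Rmult_plus_distr_r, <- plus_INR;
        replace (i + (S n - i))%nat with (S n) by lia; ring).
  rewrite plus_sum. f_equal.
  - rewrite decomp_sum by lia. simpl pred. simpl (INR 0).
    rewrite Rmult_0_l, Rplus_0_l. apply sum_eq. intros i Hi.
    simpl (S n - S i)%nat. ring.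
  - rewrite tech5. rewrite Nat.sub_diag. simpl (INR 0). rewrite Rmult_0_l, Rplus_0_r.
    apply sum_eq. intros i Hi. replace (S n - i)%nat with (S (n - i)) by lia. ring.
Qed.

Lemma De (n : nat) : fD exp_minus_one n = exp_minus_one n + fps_one n.
Proof.
  unfold fD, exp_minus_one, fps_one. simpl Nat.eqb. destruct n.
  - simpl. field.
  - simpl Nat.eqb. cbv iota. rewrite (fact_simpl (S n)), mult_INR.
    assert (H := INR_fact_neq_0 (S n)). assert (INR (S (S n)) <> 0) by (apply not_0_INR; lia).
    field. auto.
Qed.

Notation P := (fps_pow exp_minus_one).

Lemma Q (k : nat) : forall n, fD (P (S k)) n = INR (S k) * (P (S k) n + P k n).
Proof.
  induction k; intro n.
  - change (P 1) with (fps_mul exp_minus_one fps_one).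
    rewrite leibniz. rewrite mul_one.
    rewrite (mul_ext _ (fD fps_one) (fun _ => 0 * fps_one 0%nat)).
    2:{ intros m. unfold fD, fps_one. simpl. ring. }
    rewrite mul_scal_r, De, mul_one. simpl (P 0). simpl (INR 1). ring.
  - change (P (S (S k))) with (fps_mul exp_minus_one (P (S k))).
    rewrite leibniz.
    rewrite (mul_ext _ (fD (P (S k))) (fun m => INR (S k) * (P (S k) m + P k m))) by exact IHk.
    rewrite mul_scal_r, mul_plus_r.
    rewrite (mul_ext_l (fD exp_minus_one) (fun m => exp_minus_one m + fps_one m)) by exact De.
    rewrite mul_plus_l, one_mul.
    change (P (S (S k)) n) with (fps_mul exp_minus_one (P (S k)) n).
    change (P (S k) n) with (fps_mul exp_minus_one (P k) n).
    rewrite (S_INR (S k)). ring.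
Qed.

Lemma coefP (n : nat) : forall k, P k n = INR (fact k) * INR (stirling2 n k) / INR (fact n).
Proof.
  induction n; intros [|k].
  - simpl. unfold fps_one. simpl. field.
  - simpl. unfold fps_mul, exp_minus_one. simpl. field.
  - cbn [fps_pow]. unfold fps_one. simpl Nat.eqb. cbv iota. change (stirling2 (S n) 0) with O. change (INR O) with 0. unfold Rdiv. ring.
  - assert (H := Q k n). unfold fD in H.
    assert (HSn : INR (S n) <> 0) by (apply not_0_INR; lia).
    assert (E : P (S k) (S n) = INR (S k) * (P (S k) n + P k n) / INR (S n)).
    { rewrite <- H. field. auto. }
    rewrite E, !IHn.
    change (stirling2 (S n) (S k)) with (S k * stirling2 n (S k) + stirling2 n k)%nat.
    rewrite plus_INR, mult_INR, (fact_simpl n), (fact_simpl k), !mult_INR.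
    assert (H1 := INR_fact_neq_0 n). field. auto.
Qed.

Theorem mainTheorem10 (n p : nat) (hp : (1 <= p)%nat) :
  pBell n p = INR (fact p) * iter_int p (bell_poly n) 1.
Proof.
  rewrite iter_int_bell. unfold pBell. rewrite !scal_sum.
  apply sum_eq. intros k _.
  rewrite coefP, pow1. unfold Binomial.C.
  replace (k + p - p)%nat with k by lia.
  assert (H1 := INR_fact_neq_0 n). assert (H2 := INR_fact_neq_0 k).
  assert (H3 := INR_fact_neq_0 p). assert (H4 := INR_fact_neq_0 (k+p)).
  field. auto.
Qed.
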